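(* Let $R$ be an amenable affine algebra over a field $K$ with no zero divisors. Then there exist finite-dimensional $K$-subspaces $\overline{V}_1\subseteq V_1\subseteq\overline{V}_2\subseteq V_2\subseteq\cdots\subseteq R$ such that: (a) for every $r\in R$, $\lim_{n\to\infty}\dim_K(V_nr+V_n)/\dim_K(V_n)=1$; (b) $\lim_{n\to\infty}\dim_K(\overline{V}_n)/\dim_K(V_n)=1$; (c) for every finite-dimensional $K$-subspace $Z\subseteq R$ there exists $k>0$ such that $\overline{V}_n+\overline{V}_nZ\subseteq V_n$ for all $n>k$.
   Context: An affine algebra is a finitely generated associative algebra over $K$, not necessarily unital. For subspaces $V,Z$, $VZ$ denotes the $K$-span of all products $vz$. $R$ is amenable if there exist finite-dimensional $K$-subspaces $W_1\subseteq W_2\subseteq\cdots$ with $\bigcup_nW_n=R$ such that for every $r\in R$, $\lim_{n\to\infty}\dim_K(W_nr+W_n)/\dim_K(W_n)=1$. *)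

(* Defs.v *)
From HB Require Import structures.
From mathcomp Require Import all_boot all_order all_algebra.
From mathcomp Require Import boolp.
Set Implicit Arguments. Unset Strict Implicit. Unset Printing Implicit Defensive.
Import Order.TTheory GRing.Theory Num.Theory.
Local Open Scope ring_scope.

Section AffineAlgebra.
Variables (K : fieldType) (R : lmodType K).

Definition subsetR (A B : R -> Prop) : Prop := forall x, A x -> B x.

Definition kspan (s : seq R) : R -> Prop :=
  fun x => exists c : 'I_(size s) -> K, x = \sum_(i < size s) c i *: nth 0 s i.

Definition fdsub (W : R -> Prop) : Prop := exists s : seq R, W = kspan s.

(* dim_K W (kdim) : the least size of a spanning list (0 if W is not finite-dimensional,
   which never happens below). *)
Definition spanned_by (W : R -> Prop) (n : nat) : bool :=
  `[< exists s : seq R, size s = n /\ W = kspan s >].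

Definition kdim (W : R -> Prop) : nat :=
  match pselect (exists n, spanned_by W n) with
  | left H => ex_minn H
  | right _ => 0%N
  end.

Definition addsp (A B : R -> Prop) : R -> Prop :=
  fun x => exists a b, A a /\ B b /\ x = a + b.

Definition is_assoc_algebra (mul : R -> R -> R) : Prop :=
  [/\ (forall (a : K) x y z, mul (a *: x + y) z = a *: mul x z + mul y z),
      (forall (a : K) x y z, mul z (a *: x + y) = a *: mul z x + mul z y)
    & (forall x y z, mul x (mul y z) = mul (mul x y) z)].

Definition rmul (mul : R -> R -> R) (W : R -> Prop) (r : R) : R -> Prop :=
  fun x => exists w, W w /\ x = mul w r.

Definition prodsp (mul : R -> R -> R) (V Z : R -> Prop) : R -> Prop :=
  fun x => exists l : seq (K * R * R),
    (forall t, t \in l -> V t.1.2 /\ Z t.2) /\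
    x = \sum_(t <- l) t.1.1 *: mul t.1.2 t.2.

Definition subalgebra (mul : R -> R -> R) (S : R -> Prop) : Prop :=
  [/\ S 0, (forall (a : K) x y, S x -> S y -> S (a *: x + y))
    & (forall x y, S x -> S y -> S (mul x y))].

(* Affine = finitely generated as a (non-unital) K-algebra. *)
Definition affine (mul : R -> R -> R) : Prop :=
  exists gens : seq R, forall S : R -> Prop,
    subalgebra mul S -> (forall g, g \in gens -> S g) -> forall x, S x.

Definition no_zero_divisors (mul : R -> R -> R) : Prop :=
  forall x y, mul x y = 0 -> x = 0 \/ y = 0.

End AffineAlgebra.

Definition conv_to_one (f : nat -> rat) : Prop :=
  forall e : rat, 0 < e -> exists N : nat, forall n, (N <= n)%N -> `|f n - 1| < e.

Definition dimratio (a b : nat) : rat := a%:R / b%:R.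

Definition amenable (K : fieldType) (R : lmodType K) (mul : R -> R -> R) : Prop :=
  exists W : nat -> R -> Prop,
    [/\ (forall n, fdsub (W n)),
        (forall n, subsetR (W n) (W n.+1)),
        (forall x, exists n, W n x)
      & (forall r, conv_to_one (fun n => dimratio (kdim (addsp (rmul mul (W n) r) (W n))) (kdim (W n))))].

(* Main.v *)
Require Import Defs.
From HB Require Import structures.
From mathcomp Require Import all_boot all_order all_algebra.
From mathcomp Require Import boolp.
From mathcomp Require Import ring lra.
Set Implicit Arguments. Unset Strict Implicit. Unset Printing Implicit Defensive.
Import Order.TTheory GRing.Theory Num.Theory.
Local Open Scope ring_scope.

Section Span.
Variables (K : fieldType) (R : lmodType K).

Fixpoint sp (s : seq R) (x : R) : Prop :=
  if s is y :: s' then exists a : K, sp s' (x - a *: y) else x = 0.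

Definition subsp (P : R -> Prop) :=
  P 0 /\ forall (a : K) x y, P x -> P y -> P (a *: x + y).

Lemma kspanE s x : @kspan K R s x <-> exists f : nat -> K, x = \sum_(i < size s) f i *: s`_i.
Proof.
split=> [[c ->]|[f ->]].
  exists (fun n => oapp c 0 (insub n)); apply: eq_bigr => i _; by rewrite valK.
by exists (fun i => f i).
Qed.

Lemma spE s x : sp s x <-> exists f : nat -> K, x = \sum_(i < size s) f i *: s`_i.
Proof.
elim: s x => [|y s IH] x /=.
  split=> [->|[f ->]]; last by rewrite big_ord0.
  by exists (fun=> 0); rewrite big_ord0.
split=> [[a /IH [f Hf]]|[f ->]].
  exists (fun n => if n is k.+1 then f k else a).
  rewrite big_ord_recl /= -Hf.
  by rewrite addrC subrK.
exists (f 0%N); apply/IH; exists (fun n => f n.+1).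
rewrite big_ord_recl /= [f 0%N *: y + _]addrC addrK; apply: eq_bigr => i _.
by [] || rewrite lift0.
Qed.

Lemma kspan_sp s : @kspan K R s = sp s.
Proof. apply: funext => x; apply: propext; by rewrite kspanE spE. Qed.

Lemma sp_subsp s : subsp (sp s).
Proof.
split; first by apply/spE; exists (fun=> 0); rewrite big1 // => i _; rewrite scale0r.
move=> a x y /spE [f ->] /spE [g ->]; apply/spE.
exists (fun n => a * f n + g n).
rewrite scaler_sumr -big_split /=; apply: eq_bigr => i _.
by rewrite scalerA scalerDl.
Qed.

Lemma subsp0 P : subsp P -> P 0. Proof. by case. Qed.
Lemma subspD P x y : subsp P -> P x -> P y -> P (x + y).
Proof. by case=> _ H Px Py; rewrite -[x]scale1r; apply: H. Qed.
Lemma subspZ P a x : subsp P -> P x -> P (a *: x).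
Proof. by case=> H0 H Px; rewrite -[_ *: _]addr0; apply: H. Qed.
Lemma subspN P x : subsp P -> P x -> P (- x).
Proof. by move=> HP Px; rewrite -scaleN1r; apply: subspZ. Qed.
Lemma subspB P x y : subsp P -> P x -> P y -> P (x - y).
Proof. by move=> HP Px Py; apply: subspD => //; apply: subspN. Qed.

Lemma subsp_sum P (I : eqType) (l : seq I) (F : I -> R) :
  subsp P -> (forall i, i \in l -> P (F i)) -> P (\sum_(i <- l) F i).
Proof.
move=> HP; elim: l => [|i l IH] H; first by rewrite big_nil; apply: subsp0.
rewrite big_cons; apply: subspD => //; first by apply: H; rewrite inE eqxx.
by apply: IH => j jl; apply: H; rewrite inE jl orbT.
Qed.

Lemma sp_mem s x : x \in s -> sp s x.
Proof.
elim: s => [|y s IH] //=; rewrite inE => /orP [/eqP ->|xs].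
  by exists 1; rewrite scale1r subrr; apply: subsp0 (sp_subsp s).
by exists 0; rewrite scale0r subr0; apply: IH.
Qed.

Lemma sp_min P s : subsp P -> (forall x, x \in s -> P x) -> forall x, sp s x -> P x.
Proof.
move=> HP; elim: s => [|y s IH] Hs x /=; first by move=> ->; apply: subsp0.
case=> a /IH H.
have -> : x = a *: y + (x - a *: y) by rewrite addrC subrK.
case: HP => _ HP; apply: HP; first by apply: Hs; rewrite inE eqxx.
by apply: H => z zs; apply: Hs; rewrite inE zs orbT.
Qed.

Definition fd (P : R -> Prop) := exists s, P = sp s.

Lemma fdsubE P : fdsub P <-> fd P.
Proof. by rewrite /fdsub /fd; split=> -[s ->]; exists s; rewrite kspan_sp. Qed.

Lemma fd_subsp P : fd P -> subsp P.
Proof. by case=> s ->; apply: sp_subsp. Qed.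

Lemma addsp_subsp A B : subsp A -> subsp B -> subsp (addsp A B).
Proof.
move=> HA HB; split; first by exists 0, 0; rewrite addr0; split; [apply: subsp0|split; [apply: subsp0|]].
move=> a x y [x1 [x2 [H1 [H2 ->]]]] [y1 [y2 [H3 [H4 ->]]]].
exists (a *: x1 + y1), (a *: x2 + y2); split; first by case: HA => _; apply.
split; first by case: HB => _; apply.
by rewrite scalerDr addrACA.
Qed.

Lemma addspl A B x : subsp B -> A x -> addsp A B x.
Proof. by move=> HB Ax; exists x, 0; rewrite addr0; split=> //; split=> //; apply: subsp0. Qed.
Lemma addspr A B x : subsp A -> B x -> addsp A B x.
Proof. by move=> HA Bx; exists 0, x; rewrite add0r; split=> //; apply: subsp0. Qed.

Lemma addsp_min A B P : subsp P -> (forall x, A x -> P x) -> (forall x, B x -> P x) ->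
  forall x, addsp A B x -> P x.
Proof. by move=> HP HA HB x [a [b [Aa [Bb ->]]]]; apply: subspD => //; [apply: HA|apply: HB]. Qed.

Lemma addsp_cat a b : addsp (sp a) (sp b) = sp (a ++ b).
Proof.
apply: funext => x; apply: propext; split.
  apply: addsp_min; first exact: sp_subsp.
    by apply: sp_min; [exact: sp_subsp| move=> y ya; apply: sp_mem; rewrite mem_cat ya].
  by apply: sp_min; [exact: sp_subsp| move=> y ya; apply: sp_mem; rewrite mem_cat ya orbT].
apply: sp_min; first by apply: addsp_subsp; apply: sp_subsp.
move=> y; rewrite mem_cat => /orP [ya|yb].
  by apply: addspl; [apply: sp_subsp|apply: sp_mem].
by apply: addspr; [apply: sp_subsp|apply: sp_mem].
Qed.

Lemma fd_addsp A B : fd A -> fd B -> fd (addsp A B).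
Proof. by case=> a -> [b ->]; exists (a ++ b); rewrite addsp_cat. Qed.

End Span.

Section Kdim.
Variables (K : fieldType) (R : lmodType K).

Lemma kdim_le (s : seq R) : (kdim (sp s) <= size s)%N.
Proof.
rewrite /kdim; case: pselect => [H|H].
  case: ex_minnP => m _; apply; apply/asboolP; exists s; split=> //.
  by rewrite kspan_sp.
by [].
Qed.

Lemma kdim_spec (P : R -> Prop) : fd P -> exists s, size s = kdim P /\ P = sp s.
Proof.
case=> s0 Hs0; rewrite /kdim; case: pselect => [H|H].
  case: ex_minnP => m /asboolP [s [Hs ->]] _; exists s; split => //.
  by rewrite kspan_sp.
by exfalso; apply: H; exists (size s0); apply/asboolP; exists s0; split=> //; rewrite kspan_sp.
Qed.

Lemma vs_of (vT : vectType K) (Q : vT -> Prop) : subsp Q ->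
  exists U : {vspace vT}, forall v, v \in U <-> Q v.
Proof.
move=> HQ.
pose good d := `[< exists U : {vspace vT}, \dim U = d /\ forall v, v \in U -> Q v >].
have ex0 : exists d, good d.
  exists 0%N; apply/asboolP; exists 0%VS; split; first by rewrite dimv0.
  by move=> v; rewrite memv0 => /eqP ->; apply: subsp0.
have ub : forall d, good d -> (d <= dim vT)%N.
  move=> d /asboolP [U [<- _]]; rewrite -dimvf; apply: dimvS; apply: subvf.
case: (ex_maxnP ex0 ub) => m /asboolP [U [dU HU]] Hmax.
exists U => v; split; first by apply: HU.
move=> Qv; case: (boolP (v \in U)) => // vU; exfalso.
pose U' := (U + <[v]>)%VS.
have HU' : forall w, w \in U' -> Q w.
  move=> w /memv_addP [u uU [x /vlineP [k ->] ->]].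
  by apply: subspD => //; [apply: HU | apply: subspZ].
have lt : (\dim U < \dim U')%N.
  have [le eq] := dimv_leqif_sup (addvSl U <[v]>).
  rewrite ltn_neqAle le andbT eq; apply/negP => /subvP sub.
  by move/negP: vU; apply; apply: sub; apply: (subvP (addvSr U <[v]>)); apply: memv_line.
have : (\dim U' <= m)%N by apply: Hmax; apply/asboolP; exists U'; split.
by rewrite -dU leqNgt lt.
Qed.

Section Bridge.
Variable L : seq R.
Let N := size L.
Definition phi (v : 'rV[K]_N) : R := \sum_(i < N) v 0 i *: L`_i.

Lemma phiL a v w : phi (a *: v + w) = a *: phi v + phi w.
Proof.
rewrite /phi scaler_sumr -big_split; apply: eq_bigr => i _ /=.
by rewrite !mxE scalerDl scalerA.
Qed.

Lemma phi0 : phi 0 = 0.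
Proof. by rewrite /phi big1 // => i _; rewrite mxE scale0r. Qed.

Lemma phiD v w : phi (v + w) = phi v + phi w.
Proof. by have := phiL 1 v w; rewrite !scale1r. Qed.

Lemma phiZ a v : phi (a *: v) = a *: phi v.
Proof. by rewrite -[a *: v]addr0 phiL phi0 addr0. Qed.

Lemma phiB v w : phi (v - w) = phi v - phi w.
Proof. by rewrite phiD -[- w]scaleN1r phiZ scaleN1r. Qed.

Lemma phi_sum (I : Type) (l : seq I) (F : I -> 'rV[K]_N) :
  phi (\sum_(i <- l) F i) = \sum_(i <- l) phi (F i).
Proof. by apply: (big_morph phi phiD phi0). Qed.

Lemma sp_phi x : sp L x <-> exists v, x = phi v.
Proof.
rewrite spE; split=> [[f ->]|[v ->]].
  by exists (\row_(i < N) f i); apply: eq_bigr => i _; rewrite mxE.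
by exists (fun n => oapp (v 0) 0 (insub n)); apply: eq_bigr => i _; rewrite valK.
Qed.

Lemma bridge (S : R -> Prop) (U K0 : {vspace 'rV[K]_N}) :
  fd S -> (forall x, S x -> sp L x) ->
  (forall v, v \in U <-> S (phi v)) -> (forall v, v \in K0 <-> phi v = 0) ->
  (kdim S + \dim K0 = \dim U)%N.
Proof.
move=> fdS SL HU HK.
have HS := fd_subsp fdS.
have K0U : (K0 <= U)%VS by apply/subvP => v /HK e; apply/HU; rewrite e; apply: subsp0.
pose C := (U :\: K0)%VS.
have dU : \dim U = (\dim C + \dim K0)%N.
  rewrite -{1}(addv_diff_cap U K0) (capv_idPr K0U) dimv_disjoint_sum //.
  by rewrite capv_diff.
have phiC c : c \in C -> sp (map phi (vbasis C)) (phi c).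
  move=> cC; rewrite (coord_vbasis cC) phi_sum.
  apply: subsp_sum; first exact: sp_subsp.
  move=> i _; rewrite phiZ; apply: subspZ; first exact: sp_subsp.
  by apply: sp_mem; apply: map_f; apply: mem_nth; rewrite size_tuple.
have SC : S = sp (map phi (vbasis C)).
  apply: funext => x; apply: propext; split.
    move=> Sx; have [v ev] := (sp_phi x).1 (SL x Sx).
    have : v \in U by apply/HU; rewrite -ev.
    rewrite -{1}(addv_diff_cap U K0) (capv_idPr K0U) => /memv_addP [c cC [k kK ev']].
    by rewrite ev ev' phiD (HK k).1 // addr0; apply: phiC.
  apply: sp_min => // y /mapP [b bC ->]; apply/HU.
  by move: (vbasis_mem bC); apply/subvP; apply: diffvSl.
apply/eqP; rewrite eqn_leq; apply/andP; split.
  rewrite dU leq_add2r; have := kdim_le (map phi (vbasis C)).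
  by rewrite -SC size_map size_tuple.
have [s [sz Ss]] := kdim_spec fdS.
have [lift Hlift] : exists lift : R -> 'rV[K]_N, forall x, sp L x -> x = phi (lift x).
  have [f Hf] : {f : R -> 'rV[K]_N & forall x, sp L x -> x = phi (f x)}; last by exists f.
  apply: (@choice R 'rV[K]_N (fun x v => sp L x -> x = phi v)) => x; case: (pselect (sp L x)) => [/sp_phi [v ev]|nx]; first by exists v.
  by exists 0.
pose cs := map lift s.
have sub : (U <= K0 + <<cs>>)%VS.
  apply/subvP => v /HU; rewrite Ss => /spE [f ef].
  pose w := \sum_(i < size s) f i *: cs`_i.
  have ew : phi w = phi v.
    rewrite ef phi_sum; apply: eq_bigr => i _; rewrite phiZ.
    rewrite (nth_map 0) //; rewrite -Hlift //.
    by apply: SL; rewrite Ss; apply: sp_mem; apply: mem_nth.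
  have -> : v = (v - w) + w by rewrite subrK.
  apply: memv_add; first by apply/HK; rewrite phiB ew subrr.
  apply: memv_suml => i _; apply: memvZ; apply: memv_span; apply: mem_nth.
  by rewrite size_map.
rewrite -sz; apply: leq_trans (dimvS sub) _.
apply: leq_trans ((dimv_add_leqif _ _).1) _.
rewrite addnC leq_add2r; apply: leq_trans (dim_span _) _.
by rewrite size_map.
Qed.

End Bridge.
End Kdim.

Section Kdim2.
Variables (K : fieldType) (R : lmodType K).

Lemma pre_vs (L : seq R) (P : R -> Prop) : subsp P ->
  exists U : {vspace 'rV[K]_(size L)}, forall v, v \in U <-> P (@phi _ _ L v).
Proof.
move=> HP; apply: vs_of; split; first by rewrite phi0; apply: subsp0.
by move=> a x y Px Py; rewrite phiL; case: HP => _; apply.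
Qed.

Lemma subsp_zero : subsp (fun x : R => x = 0).
Proof. by split=> // a x y -> ->; rewrite scaler0 addr0. Qed.

Lemma kdim_mono (S T : R -> Prop) : fd S -> fd T -> (forall x, S x -> T x) ->
  (kdim S <= kdim T)%N.
Proof.
move=> fS fT ST; have [L eT] := fT.
have [US HUS] := pre_vs L (fd_subsp fS).
have [UT HUT] := pre_vs L (fd_subsp fT).
have [K0 HK0] := pre_vs L subsp_zero.
have e1 := bridge fS (fun x Sx => eq_ind _ (fun P => P x) (ST x Sx) _ eT) HUS HK0.
have e2 := bridge fT (fun x Tx => eq_ind _ (fun P => P x) Tx _ eT) HUT HK0.
have : (\dim US <= \dim UT)%N.
  by apply: dimvS; apply/subvP => v /HUS /ST /HUT.
by rewrite -e1 -e2 leq_add2r.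
Qed.

Lemma kdim_submod (A X Y : R -> Prop) : fd A -> fd X -> fd Y ->
  (forall x, A x -> X x) -> (forall x, A x -> Y x) ->
  (kdim (addsp X Y) + kdim A <= kdim X + kdim Y)%N.
Proof.
move=> fA fX fY AX AY.
have [x eX] := fX; have [y eY] := fY.
have eXY : addsp X Y = sp (x ++ y) by rewrite eX eY addsp_cat.
have fXY : fd (addsp X Y) by exists (x ++ y).
set L := x ++ y.
have XL : forall z, X z -> sp L z.
  by move=> z Xz; rewrite -eXY; apply: addspl => //; apply: fd_subsp.
have YL : forall z, Y z -> sp L z.
  by move=> z Yz; rewrite -eXY; apply: addspr => //; apply: fd_subsp.
have [UA HUA] := pre_vs L (fd_subsp fA).
have [UX HUX] := pre_vs L (fd_subsp fX).
have [UY HUY] := pre_vs L (fd_subsp fY).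
have [UXY HUXY] := pre_vs L (fd_subsp fXY).
have [K0 HK0] := pre_vs L subsp_zero.
have eA := bridge fA (fun z Az => XL z (AX z Az)) HUA HK0.
have eX' := bridge fX XL HUX HK0.
have eY' := bridge fY YL HUY HK0.
have eXY' := bridge fXY (fun z H => eq_ind _ (fun P => P z) H _ eXY) HUXY HK0.
have s1 : (UXY <= UX + UY)%VS.
  apply/subvP => v /HUXY [a [b [Xa [Yb ev]]]].
  have [c ec] := (@sp_phi _ _ L a).1 (XL a Xa).
  have -> : v = c + (v - c) by rewrite addrC subrK.
  apply: memv_add; first by apply/HUX; rewrite -ec.
  by apply/HUY; rewrite phiB ev -ec addrC addKr.
have s2 : (UA <= UX :&: UY)%VS.
  by apply/subvP => v /HUA Av; rewrite memv_cap; apply/andP; split; [apply/HUX; apply: AX|apply/HUY; apply: AY].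
have := dimv_sum_cap UX UY.
have := dimvS s1; have := dimvS s2.
rewrite -eA -eX' -eY' -eXY'.
move=> h1 h2 h3.
have h4 := leq_add h2 h1. rewrite h3 in h4.
rewrite -(leq_add2r (\dim K0 + \dim K0)).
apply: leq_trans _ (eq_leq _) ; last by rewrite addnACA.
by apply: leq_trans h4; rewrite addnACA leqnn.
Qed.

End Kdim2.

Section Alg.
Variables (K : fieldType) (R : lmodType K) (mul : R -> R -> R).
Hypothesis HL : forall (a : K) x y z, mul (a *: x + y) z = a *: mul x z + mul y z.
Hypothesis HR : forall (a : K) x y z, mul z (a *: x + y) = a *: mul z x + mul z y.

Lemma mul0l z : mul 0 z = 0.
Proof.
have := HL 1 0 0 z; rewrite !scale1r addr0 => h.
by apply: (addrI (mul 0 z)); rewrite addr0 -h.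
Qed.
Lemma mul0r z : mul z 0 = 0.
Proof.
have := HR 1 0 0 z; rewrite !scale1r addr0 => h.
by apply: (addrI (mul z 0)); rewrite addr0 -h.
Qed.
Lemma mulDl x y z : mul (x + y) z = mul x z + mul y z.
Proof. by have := HL 1 x y z; rewrite !scale1r. Qed.
Lemma mulZl a x z : mul (a *: x) z = a *: mul x z.
Proof. by have := HL a x 0 z; rewrite !addr0 mul0l addr0. Qed.
Lemma mulDr x y z : mul z (x + y) = mul z x + mul z y.
Proof. by have := HR 1 x y z; rewrite !scale1r. Qed.
Lemma mulZr a x z : mul z (a *: x) = a *: mul z x.
Proof. by have := HR a x 0 z; rewrite !addr0 mul0r addr0. Qed.

Lemma mul_suml (I : Type) (l : seq I) (F : I -> R) r :
  mul (\sum_(i <- l) F i) r = \sum_(i <- l) mul (F i) r.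
Proof. by apply: (big_morph (fun x => mul x r) (fun x y => mulDl x y r) (mul0l r)). Qed.

Lemma rmul_subsp A r : subsp A -> subsp (rmul mul A r).
Proof.
move=> HA; split; first by exists 0; rewrite mul0l; split=> //; apply: subsp0.
move=> a x y [u [Au ->]] [w [Aw ->]]; exists (a *: u + w); split; last by rewrite HL.
by case: HA => _; apply.
Qed.

Lemma prodsp_subsp V Z : subsp (prodsp mul V Z).
Proof.
split; first by exists [::]; rewrite big_nil.
move=> a x y [lx [Hx ->]] [ly [Hy ->]].
exists ([seq (a * t.1.1, t.1.2, t.2) | t <- lx] ++ ly); split.
  move=> t; rewrite mem_cat => /orP [/mapP [u ul ->]|tl]; last by apply: Hy.
  exact: Hx u ul.
rewrite big_cat big_map /= scaler_sumr; congr (_ + _); apply: eq_bigr => t _.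
by rewrite scalerA.
Qed.

Lemma prodsp_mem (V Z : R -> Prop) v z : V v -> Z z -> prodsp mul V Z (mul v z).
Proof.
move=> Vv Zz; exists [:: (1, v, z)]; split; last by rewrite big_seq1 scale1r.
by move=> t; rewrite inE => /eqP ->.
Qed.

Lemma prodsp_min (V Z P : R -> Prop) : subsp P ->
  (forall v z, V v -> Z z -> P (mul v z)) -> forall x, prodsp mul V Z x -> P x.
Proof.
move=> HP H x [l [Hl ->]]; apply: subsp_sum => // t tl; apply: subspZ => //.
by case: (Hl t tl) => ? ?; apply: H.
Qed.

Lemma prodsp_mono (V V' Z Z' : R -> Prop) : (forall x, V x -> V' x) -> (forall x, Z x -> Z' x) ->
  forall x, prodsp mul V Z x -> prodsp mul V' Z' x.
Proof.
move=> HV HZ; apply: prodsp_min; first exact: prodsp_subsp.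
by move=> v z Vv Zz; apply: prodsp_mem; [apply: HV|apply: HZ].
Qed.

Lemma rmul_sp a r : rmul mul (sp a) r = sp (map (mul^~ r) a).
Proof.
apply: funext => x; apply: propext; split.
  case=> w [aw ->]; move: w aw; apply: sp_min.
    split; first by rewrite mul0l; apply: subsp0 (sp_subsp _).
    by move=> c u v Hu Hv; rewrite HL; case: (sp_subsp (map (mul^~ r) a)) => _; apply.
  by move=> u ua; apply: sp_mem; apply: map_f.
apply: sp_min; first by apply: rmul_subsp; apply: sp_subsp.
by move=> y /mapP [u ua ->]; exists u; split=> //; apply: sp_mem.
Qed.

Lemma fd_rmul A r : fd A -> fd (rmul mul A r).
Proof. by case=> a ->; exists (map (mul^~ r) a); rewrite rmul_sp. Qed.

Lemma prodsp_sp a b : prodsp mul (sp a) (sp b) = sp [seq mul x y | x <- a, y <- b].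
Proof.
apply: funext => x; apply: propext; split.
  apply: prodsp_min; first exact: sp_subsp.
  move=> v z; move: v; apply: (sp_min (P := fun v => sp b z -> sp _ (mul v z))).
    split; first by rewrite mul0l => _; apply: subsp0 (sp_subsp _).
    move=> c u w Hu Hw Hz; rewrite HL; case: (sp_subsp [seq mul x y | x <- a, y <- b]) => _.
    by apply; [apply: Hu|apply: Hw].
  move=> u ua; move: z; apply: sp_min.
    split; first by rewrite mul0r; apply: subsp0 (sp_subsp _).
    by move=> c w w' Hw Hw'; rewrite HR; case: (sp_subsp [seq mul x y | x <- a, y <- b]) => _; apply.
  by move=> w wb; apply: sp_mem; apply: allpairs_f.
apply: sp_min; first exact: prodsp_subsp.
move=> y /allpairsP [[u w] /= [ua wb ->]].
by apply: prodsp_mem; apply: sp_mem.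
Qed.

Lemma fd_prodsp V Z : fd V -> fd Z -> fd (prodsp mul V Z).
Proof. by case=> a -> [b ->]; eexists; rewrite prodsp_sp. Qed.

End Alg.

Lemma ratio_a (x y : nat) (e : rat) : (0 < y)%N -> (y <= x)%N ->
  x%:R <= (1 + e) * y%:R -> `|dimratio x y - 1| <= e.
Proof.
move=> y0 yx h; rewrite /dimratio.
have hb : 0 < y%:R :> rat by rewrite ltr0n.
have h1 : 1 <= x%:R / y%:R :> rat by rewrite ler_pdivlMr // mul1r ler_nat.
have h2 : x%:R / y%:R <= 1 + e :> rat by rewrite ler_pdivrMr.
move: h1 h2; set q := x%:R / y%:R => h1 h2.
rewrite ler_norml; apply/andP; split; lra.
Qed.

Lemma ratio_b (x y : nat) (e : rat) : (0 < x)%N -> (x <= y)%N ->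
  y%:R <= (1 + e) * x%:R -> 0 <= e -> `|dimratio x y - 1| <= e.
Proof.
move=> x0 xy h e0; rewrite /dimratio.
have ha : 0 < x%:R :> rat by rewrite ltr0n.
have hb : 0 < y%:R :> rat by rewrite ltr0n; apply: leq_trans xy.
have hxy : x%:R <= y%:R :> rat by rewrite ler_nat.
have h1 : x%:R / y%:R <= 1 :> rat by rewrite ler_pdivrMr // mul1r.
have h2 : 1 - e <= x%:R / y%:R :> rat by rewrite ler_pdivlMr //; nra.
move: h1 h2; set q := x%:R / y%:R => h1 h2.
rewrite ler_norml; apply/andP; split; lra.
Qed.

Lemma small_inv (e : rat) : 0 < e -> exists n : nat, (n.+1%:R)^-1 < e.
Proof.
move=> e0; exists (Num.Def.archi_bound e^-1).
have ei : 0 <= e^-1 by rewrite invr_ge0 ltW.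
have h := archi_boundP ei.
set b := Num.Def.archi_bound _ in h *.
rewrite -[e]invrK ltf_pV2 ?posrE ?ltr0n ?invr_gt0 //.
by apply: lt_trans h _; rewrite ltr_nat.
Qed.

Section Main.
Variables (K : fieldType) (R : lmodType K) (mul : R -> R -> R).
Hypothesis HL : forall (a : K) x y z, mul (a *: x + y) z = a *: mul x z + mul y z.
Hypothesis HR : forall (a : K) x y z, mul z (a *: x + y) = a *: mul z x + mul z y.
Hypothesis HA : forall x y z, mul x (mul y z) = mul (mul x y) z.
Variable W : nat -> R -> Prop.
Hypothesis Wfd : forall n, fd (W n).
Hypothesis Wnest : forall n x, W n x -> W n.+1 x.
Hypothesis Wex : forall x, exists n, W n x.
Hypothesis Wfol : forall r, conv_to_one
  (fun n => dimratio (kdim (addsp (rmul mul (W n) r) (W n))) (kdim (W n))).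

Lemma W_subsp n : subsp (W n). Proof. exact: fd_subsp. Qed.

Lemma W_mono m n x : (m <= n)%N -> W m x -> W n x.
Proof.
move=> /subnK <-; elim: (n - m)%N => [//|k IH] Wx.
by rewrite addSn; apply: Wnest; apply: IH.
Qed.

Lemma list_in_W (s : seq R) : exists k, forall x, x \in s -> W k x.
Proof.
elim: s => [|y s [k IH]]; first by exists 0%N.
have [n Wy] := Wex y; exists (maxn n k) => x; rewrite inE => /orP [/eqP ->|xs].
  by apply: W_mono Wy; apply: leq_maxl.
by apply: W_mono (IH x xs); apply: leq_maxr.
Qed.

Lemma fd_in_W P : fd P -> exists k, forall x, P x -> W k x.
Proof.
case=> s ->; have [k Hk] := list_in_W s; exists k.
by apply: sp_min => //; apply: W_subsp.
Qed.

Lemma fol1 r (e : rat) : 0 < e -> exists N, forall m, (N <= m)%N ->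
  (0 < kdim (W m))%N /\
  (kdim (addsp (rmul mul (W m) r) (W m)))%:R < (1 + e) * (kdim (W m))%:R.
Proof.
move=> e0; have [N1 H1] := Wfol r e0; have [N2 H2] := Wfol r (ltr01 : (0:rat) < 1).
exists (maxn N1 N2) => m; rewrite geq_max => /andP [m1 m2].
have := H1 m m1; have := H2 m m2; rewrite /dimratio.
set x := kdim _; set y := kdim _.
case: (posnP y) => [->|y0]; first by rewrite invr0 mulr0 sub0r normrN normr1 ltxx.
have hb : 0 < y%:R :> rat by rewrite ltr0n.
rewrite !ltr_norml => /andP [_ _] /andP [_ h]; split=> //.
by move: h; rewrite ltrBlDr ltr_pdivrMr // addrC.
Qed.


Lemma folY (y : seq R) (e : rat) : 0 < e -> exists N, forall m, (N <= m)%N ->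
  (0 < kdim (W m))%N /\
  (kdim (addsp (W m) (prodsp mul (W m) (sp y))))%:R <= (1 + e) * (kdim (W m))%:R.
Proof.
elim: y e => [|y ys IH] e e0.
  have [N HN] := fol1 0 e0; exists N => m Nm; have [p0 _] := HN m Nm; split=> //.
  have : (kdim (addsp (W m) (prodsp mul (W m) (sp [::]))) <= kdim (W m))%N.
    apply: kdim_mono => //.
      by apply: fd_addsp => //; apply: fd_prodsp => //; exists [::].
    apply: addsp_min => //; first exact: W_subsp.
    apply: prodsp_min; first exact: W_subsp.
    by move=> v z _ /= ->; rewrite mul0r //; apply: subsp0; apply: W_subsp.
  rewrite -(ler_nat rat) => h; apply: le_trans h _.
  rewrite mulrDl mul1r lerDl; apply: mulr_ge0; [exact: ltW | exact: ler0n].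
have e2 : 0 < e / 2 by apply: divr_gt0 => //; rewrite ltr0n.
have [N1 H1] := IH _ e2; have [N2 H2] := fol1 y e2.
exists (maxn N1 N2) => m; rewrite geq_max => /andP [m1 m2].
have [p0 h1] := H1 m m1; have [_ h2] := H2 m m2; split=> //.
set A := W m in p0 h1 h2 *.
set X := addsp (rmul mul A y) A.
set Y := addsp A (prodsp mul A (sp ys)).
have fA : fd A by apply: Wfd.
have fX : fd X by apply: fd_addsp => //; apply: fd_rmul.
have fY : fd Y by apply: fd_addsp => //; apply: fd_prodsp => //; exists ys.
have sA := fd_subsp fA.
have sub := kdim_submod fA fX fY (fun x Ax => addspr (rmul_subsp HL y sA) Ax)
                                   (fun x Ax => addspl (prodsp_subsp mul _ _) Ax).
have sT : (kdim (addsp A (prodsp mul A (sp (y :: ys)))) <= kdim (addsp X Y))%N.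
  apply: kdim_mono.
  - by apply: fd_addsp => //; apply: fd_prodsp => //; exists (y :: ys).
  - exact: fd_addsp.
  apply: addsp_min; first by apply: addsp_subsp; apply: fd_subsp.
    by move=> x Ax; apply: addspr; [apply: fd_subsp|apply: addspl => //; apply: prodsp_subsp].
  apply: prodsp_min; first by apply: addsp_subsp; apply: fd_subsp.
  move=> v z Av [a Hz].
  have -> : z = a *: y + (z - a *: y) by rewrite addrC subrK.
  rewrite HR -(mulZl HL).
  exists (mul (a *: v) y), (mul v (z - a *: y)); split.
    by apply: addspl => //; exists (a *: v); split => //; apply: subspZ.
  split=> //; apply: addspr => //; apply: prodsp_mem => //.
have hh : (kdim (addsp A (prodsp mul A (sp (y :: ys)))) + kdim A <= kdim X + kdim Y)%N.
  by apply: leq_trans sub; rewrite leq_add2r.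
move: hh; rewrite -(ler_nat rat) !natrD => hh.
have := ler0n rat (kdim A).
nra.
Qed.

End Main.

Lemma eps_mono (n1 n : nat) : (n1 <= n)%N -> (n.+1%:R)^-1 <= (n1.+1%:R)^-1 :> rat.
Proof. by move=> h; rewrite lef_pV2 ?posrE ?ltr0n // ler_nat ltnS. Qed.

Lemma eps_pos (n : nat) : 0 < (n.+1%:R)^-1 :> rat.
Proof. by rewrite invr_gt0 ltr0n. Qed.

Theorem lemma3 (K : fieldType) (R : lmodType K) (mul : R -> R -> R) :
  is_assoc_algebra mul -> affine mul -> amenable mul -> no_zero_divisors mul ->
  exists Vb V : nat -> R -> Prop,
    [/\ (forall n, fdsub (Vb n) /\ fdsub (V n)),
        (forall n, subsetR (Vb n) (V n) /\ subsetR (V n) (Vb n.+1)),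
        (forall r, conv_to_one (fun n => dimratio (kdim (addsp (rmul mul (V n) r) (V n))) (kdim (V n)))),
        conv_to_one (fun n => dimratio (kdim (Vb n)) (kdim (V n)))
      & (forall Z : R -> Prop, fdsub Z ->
           exists k : nat, (0 < k)%N /\
             forall n, (k < n)%N -> subsetR (addsp (Vb n) (prodsp mul (Vb n) Z)) (V n))].
Proof.
case=> HL HR HA _ [W [Wfd0 Wnest Wex Wfol]] _.
have Wfd : forall n, fd (W n) by move=> n; apply/fdsubE.
have Wsub : forall n, subsp (W n) by move=> n; apply: fd_subsp.
pose Vf m n := addsp (W m) (prodsp mul (W m) (W n)).
have fVf : forall m n, fd (Vf m n).
  by move=> m n; apply: fd_addsp => //; apply: fd_prodsp.
have sVf : forall m n, subsp (Vf m n) by move=> m n; apply: fd_subsp.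
have [p Hp] : {p : nat -> nat & forall n x, Vf n n x -> W (p n) x}.
  apply: (@choice nat nat (fun n k => forall x, Vf n n x -> W k x)) => n.
  by have [k Hk] := fd_in_W Wfd Wnest Wex (fVf n n); exists k.
have Wp : forall n x, W n x -> W (p n) x.
  by move=> n x Wx; apply: Hp; apply: addspl => //; apply: prodsp_subsp.
have Pp : forall n v z, W n v -> W n z -> W (p n) (mul v z).
  by move=> n v z Wv Wz; apply: Hp; apply: addspr => //; apply: prodsp_mem.
have [Nf HN] : {Nf : nat -> nat & forall n m, (Nf n <= m)%N ->
    (0 < kdim (W m))%N /\ (kdim (Vf m (p n)))%:R <= (1 + (n.+1%:R)^-1) * (kdim (W m))%:R :> rat}.
  apply: (@choice nat nat (fun n N => forall m, (N <= m)%N ->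
    (0 < kdim (W m))%N /\ (kdim (Vf m (p n)))%:R <= (1 + (n.+1%:R)^-1) * (kdim (W m))%:R :> rat)) => n.
  have [y ey] := Wfd (p n); rewrite /Vf ey.
  by apply: folY => //; apply: eps_pos.
have [qf Hq] : {qf : nat * nat -> nat & forall mn x, Vf mn.1 mn.2 x -> W (qf mn) x}.
  apply: (@choice (nat * nat) nat (fun mn k => forall x, Vf mn.1 mn.2 x -> W k x)) => mn.
  by have [k Hk] := fd_in_W Wfd Wnest Wex (fVf mn.1 mn.2); exists k.
pose mm := fix mm n := if n is n'.+1 then maxn (Nf n) (qf (mm n', n')) else Nf 0%N.
have mmN : forall n, (Nf n <= mm n)%N by case=> [|n] //=; apply: leq_maxl.
have Vsub : forall n x, Vf (mm n) n x -> Vf (mm n) (p n) x.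
  move=> n; apply: addsp_min => //.
    by move=> x Ax; apply: addspl => //; apply: prodsp_subsp.
  move=> x Px; apply: addspr => //; move: x Px; apply: prodsp_mono => //.
  exact: Wp.
have rsub : forall n r, W n r -> forall x,
    addsp (rmul mul (Vf (mm n) n) r) (Vf (mm n) n) x -> Vf (mm n) (p n) x.
  move=> n r Wr; apply: addsp_min => //; last exact: Vsub.
  move=> x [w [[a [b [Aa [Pb ->]]]] ->]].
  rewrite (mulDl HL); apply: subspD => //.
    by apply: addspr => //; apply: prodsp_mem => //; apply: Wp.
  move: b Pb; apply: (prodsp_min (P := fun b => Vf (mm n) (p n) (mul b r))).
    split; first by rewrite (mul0l HL); apply: subsp0.
    by move=> c u v Hu Hv; rewrite HL; case: (sVf (mm n) (p n)) => _; apply.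
  move=> v z Av Wz; rewrite -HA; apply: addspr => //; apply: prodsp_mem => //.
  exact: Pp.
have dAV : forall n, (kdim (W (mm n)) <= kdim (Vf (mm n) n))%N.
  move=> n; apply: kdim_mono => // x Ax; apply: addspl => //; apply: prodsp_subsp.
have dVT : forall n, (kdim (Vf (mm n) n) <= kdim (Vf (mm n) (p n)))%N.
  by move=> n; apply: kdim_mono => //; apply: Vsub.
exists (fun n => W (mm n)), (fun n => Vf (mm n) n); split.
- by move=> n; split; apply/fdsubE.
- move=> n; split.
    by move=> x Wx; apply: addspl => //; apply: prodsp_subsp.
  move=> x Vx; have := Hq (mm n, n) x Vx; apply: (W_mono Wnest) => //=.
  exact: leq_maxr.
- move=> r e e0.
  have [n0 Wr] := Wex r; have [n1 Hn1] := small_inv e0.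
  exists (maxn n0 n1) => n; rewrite geq_max => /andP [h0 h1].
  have [dpos hT] := HN n (mm n) (mmN n).
  have Wrn : W n r by apply: (W_mono Wnest) Wr.
  have dVX : (kdim (Vf (mm n) n) <= kdim (addsp (rmul mul (Vf (mm n) n) r) (Vf (mm n) n)))%N.
    apply: kdim_mono => //; first by apply: fd_addsp => //; apply: fd_rmul.
    by move=> x Vx; apply: addspr => //; apply: rmul_subsp.
  have dXT : (kdim (addsp (rmul mul (Vf (mm n) n) r) (Vf (mm n) n)) <= kdim (Vf (mm n) (p n)))%N.
    apply: kdim_mono => //; first by apply: fd_addsp => //; apply: fd_rmul.
    exact: rsub.
  have hε := eps_mono h1; have hp := eps_pos n.
  apply: le_lt_trans _ (le_lt_trans hε Hn1).
  apply: ratio_a => //; first by apply: leq_trans dpos (dAV n).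
  move: (dAV n) dXT hT; rewrite -!(ler_nat rat) => h2 h3 hT.
  apply: le_trans h3 (le_trans hT _); rewrite ler_pM2l //.
  by apply: lt_le_trans (ltr01 : (0:rat) < 1) _; rewrite lerDl ltW.
- move=> e e0; have [n1 Hn1] := small_inv e0; exists n1 => n h1.
  have [dpos hT] := HN n (mm n) (mmN n).
  have hε := eps_mono h1; have hp := eps_pos n.
  apply: le_lt_trans _ (le_lt_trans hε Hn1).
  apply: ratio_b => //; last exact: ltW.
  move: (dVT n) hT; rewrite -!(ler_nat rat) => h3 hT.
  exact: le_trans h3 hT.
- move=> Z /fdsubE fZ; have [k0 Hk0] := fd_in_W Wfd Wnest Wex fZ.
  exists k0.+1; split=> // n hn.
  apply: addsp_min => //.
    by move=> x Ax; apply: addspl => //; apply: prodsp_subsp.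
  move=> x Px; apply: addspr => //; move: x Px; apply: prodsp_mono => // z Zz.
  by apply: (W_mono Wnest) (Hk0 z Zz); apply: ltnW; apply: ltnW.
Qed.
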